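(* Let $p\in(1,\infty)$ be such that $\gamma_{p,w}:=\gamma\, n^{1/p}(w_{\max}/w_{\min})^{1/p}<1$, let $Q^*_\lambda$ be the unique fixed point of $F_\lambda$, and let $\theta^*_p:=\arg\min_{\theta\in\mathbb{R}^d} f_p(\theta)$, where $f_p(\theta)=\frac1p\|F_\lambda(\Phi\theta)-\Phi\theta\|_{p,w}^p$. Then \[ \|Q_{\theta^*_p}-Q^*_\lambda\|_{p,w}\le\frac{1+\gamma_{p,w}}{1-\gamma_{p,w}}\min_{\theta\in\mathbb{R}^d}\|Q_\theta-Q^*_\lambda\|_{p,w}. \]
   Context: Finite discounted MDP with state space $\mathcal S$, action space $\mathcal A$, transition probabilities $P(s'\mid s,a)$, expected reward $R(s,a)$, discount $\gamma\in[0,1)$; $n=|\mathcal S||\mathcal A|$ and Q-functions are vectors in $\mathbb{R}^n$ indexed by $(s,a)$. For $\lambda>0$, $(F_\lambda Q)(s,a) := R(s,a)+\gamma\sum_{s'}P(s'\mid s,a)\,\lambda\ln\big(\sum_{u\in\mathcal A}\exp(Q(s',u)/\lambda)\big)$. Weights $w_i>0$ with $\sum_i w_i=1$, $\|x\|_{p,w}=(\sum_i w_i|x_i|^p)^{1/p}$, $w_{\min}=\min_i w_i$, $w_{\max}=\max_i w_i$. $\Phi\in\mathbb{R}^{n\times d}$ is a full-rank feature matrix and $Q_\theta=\Phi\theta$. When $\gamma_{p,w}<1$, $F_\lambda$ is a contraction in $\|\cdot\|_{p,w}$ with unique fixed point $Q^*_\lambda$. *)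

(* Defs.v *)
From mathcomp Require Import all_boot all_order all_algebra.
From mathcomp Require Import reals sequences exp.
Set Implicit Arguments. Unset Strict Implicit. Unset Printing Implicit Defensive.
Import Order.TTheory GRing.Theory Num.Theory.
Local Open Scope ring_scope.

Section MDPDefs.
Variable R : realType.

Definition pwnorm (I : finType) (p : R) (w x : I -> R) : R :=
  (\sum_i w i * `|x i| `^ p) `^ p^-1.

(* w_max and w_min over a finite index type (weights are positive, so the
   seeds 0 and w_max do not affect the value for a nonempty index type) *)
Definition wmax (I : finType) (w : I -> R) : R := \big[Num.max/0]_i w i.
Definition wmin (I : finType) (w : I -> R) : R := \big[Num.min/wmax w]_i w i.

Variables (S A : finType) (d : nat).

Definition Qtheta (Phi : S * A -> 'I_d -> R) (th : 'I_d -> R) : S * A -> R :=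
  fun i => \sum_j Phi i j * th j.

Definition full_rank (Phi : S * A -> 'I_d -> R) : Prop :=
  forall th : 'I_d -> R, (forall i, Qtheta Phi th i = 0) -> forall j, th j = 0.

Definition Fsoft (gamma lam : R) (P : S -> A -> S -> R) (Rw : S -> A -> R)
  (Q : S * A -> R) : S * A -> R :=
  fun sa => Rw sa.1 sa.2 + gamma * \sum_(s' : S) P sa.1 sa.2 s' *
             (lam * ln (\sum_(u : A) expR (Q (s', u) / lam))).

Definition f_p (p gamma lam : R) (P : S -> A -> S -> R) (Rw : S -> A -> R)
  (w : S * A -> R) (Phi : S * A -> 'I_d -> R) (th : 'I_d -> R) : R :=
  p^-1 * (pwnorm p w (fun i => Fsoft gamma lam P Rw (Qtheta Phi th) i
                                - Qtheta Phi th i)) `^ p.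

Definition gamma_pw (p gamma : R) (w : S * A -> R) : R :=
  gamma * (#|{: S * A}|%:R : R) `^ p^-1 * (wmax w / wmin w) `^ p^-1.

End MDPDefs.

(* Main.v *)
Require Import Defs.
From mathcomp Require Import all_boot all_order all_algebra.
From mathcomp Require Import reals sequences exp convex hoelder interval_inference classical_sets.
From mathcomp Require Import ring lra.
Import Order.TTheory GRing.Theory Num.Theory.
Local Open Scope ring_scope.

Lemma conv_pow (R : realType) (p t x y : R) : 1 <= p -> 0 <= t -> t <= 1 ->
  0 <= x -> 0 <= y ->
  (t * x + (1 - t) * y) `^ p <= t * x `^ p + (1 - t) * y `^ p.
Proof.
move=> p1 t0 t1 x0 y0.
have := convex_powR p1 (Itv01 t0 t1) (x := x) (y := y).
rewrite !inE /= !in_itv /= x0 y0 /= => /(_ isT isT).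
by rewrite !convRE.
Qed.

Lemma powR_invK (R : realType) (p a : R) : 0 < p -> 0 <= a -> (a `^ p) `^ p^-1 = a.
Proof. by move=> p0 a0; rewrite -powRrM mulfV ?gt_eqF // powRr1. Qed.

Lemma powR_Kinv (R : realType) (p a : R) : 0 < p -> 0 <= a -> (a `^ p^-1) `^ p = a.
Proof. by move=> p0 a0; rewrite -powRrM mulVf ?gt_eqF // powRr1. Qed.

Lemma powRV' (R : realType) (p a : R) : 0 < a -> (a^-1) `^ p = (a `^ p)^-1.
Proof.
move=> a0.
have h : a `^ p * (a^-1) `^ p = 1.
  by rewrite -powRM ?invr_ge0 ?(ltW a0) // mulfV ?gt_eqF // powR1.
have hp : 0 < a `^ p by apply: powR_gt0.
by rewrite -[LHS]mul1r -(@mulVf _ (a `^ p)) ?gt_eqF // -mulrA h mulr1.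
Qed.

Section Norm.
Variables (R : realType) (I : finType) (p : R) (w : I -> R).
Hypothesis hp : 1 < p.
Hypothesis hw : forall i, 0 < w i.

Let p0 : 0 < p. Proof. by apply: lt_trans hp. Qed.

Lemma N_ge0 (x : I -> R) : 0 <= pwnorm p w x.
Proof. exact: powR_ge0. Qed.

Lemma sum_ge0 (x : I -> R) : 0 <= \sum_i w i * `|x i| `^ p.
Proof. by apply: sumr_ge0 => i _; rewrite mulr_ge0 ?powR_ge0 ?(ltW (hw i)). Qed.

Lemma N_pow (x : I -> R) : pwnorm p w x `^ p = \sum_i w i * `|x i| `^ p.
Proof. by rewrite /pwnorm powR_Kinv // sum_ge0. Qed.

Lemma N_le (x y : I -> R) : (forall i, `|x i| <= `|y i|) -> pwnorm p w x <= pwnorm p w y.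
Proof.
move=> h; rewrite /pwnorm; apply: ge0_ler_powR; rewrite ?invr_ge0 ?(ltW p0) ?nnegrE ?sum_ge0 //.
apply: ler_sum => i _; rewrite ler_wpM2l ?(ltW (hw i)) //.
by apply: ge0_ler_powR; rewrite ?(ltW p0) ?nnegrE.
Qed.

Lemma N_const (c : R) : \sum_i w i = 1 -> 0 <= c -> pwnorm p w (fun=> c) = c.
Proof.
move=> hs c0; rewrite /pwnorm -big_distrl /= hs mul1r ger0_norm //.
by rewrite powR_invK.
Qed.

Lemma N_zero (x : I -> R) : pwnorm p w x = 0 -> forall i, x i = 0.
Proof.
move=> h i; have := N_pow x; rewrite h powR0 ?gt_eqF // => /esym /eqP.
rewrite psumr_eq0 => [/allP /(_ i) |]; last first.
  by move=> j _; rewrite mulr_ge0 ?powR_ge0 ?(ltW (hw j)).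
rewrite mem_index_enum => /(_ isT) /=.
rewrite mulf_eq0 gt_eqF //= powR_eq0 => /andP [] /eqP /normr0_eq0 //.
Qed.

Lemma mink_core (a b : R) (x y : I -> R) : 0 < a -> 0 < b ->
  \sum_i w i * `|x i| `^ p = a `^ p -> \sum_i w i * `|y i| `^ p = b `^ p ->
  \sum_i w i * `|x i + y i| `^ p <= (a + b) `^ p.
Proof.
move=> ap bp hx hy.
have abp : 0 < a + b by rewrite addr_gt0.
have t0 : 0 <= a / (a + b) by rewrite divr_ge0 // ltW.
have t1 : a / (a + b) <= 1 by rewrite ler_pdivrMr // mul1r lerDl ltW.
have hi : forall i, w i * `|x i + y i| `^ p <=
    ((a + b) `^ p * (a / (a + b)) / a `^ p) * (w i * `|x i| `^ p)
  + ((a + b) `^ p * (1 - a / (a + b)) / b `^ p) * (w i * `|y i| `^ p).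
  move=> i.
  have e : `|x i| + `|y i| = (a + b) * (a / (a + b) * (`|x i| / a)
                + (1 - a / (a + b)) * (`|y i| / b)).
    field; rewrite ?gt_eqF //.
  have h1 : `|x i + y i| `^ p <= (`|x i| + `|y i|) `^ p.
    by apply: ge0_ler_powR; rewrite ?nnegrE ?addr_ge0 ?(ltW p0) // ler_normD.
  have h2 : (a / (a + b) * (`|x i| / a) + (1 - a / (a + b)) * (`|y i| / b)) `^ p <=
      a / (a + b) * (`|x i| / a) `^ p + (1 - a / (a + b)) * (`|y i| / b) `^ p.
    apply: conv_pow => //; [exact: ltW | apply: divr_ge0 => //; exact: ltW | apply: divr_ge0 => //; exact: ltW].
  rewrite e powRM ?(ltW abp) // in h1; last first.
    by apply: addr_ge0; apply: mulr_ge0; rewrite ?subr_ge0 // divr_ge0 // ltW.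
  rewrite !powRM ?invr_ge0 ?(ltW ap) ?(ltW bp) // !powRV' // in h2.
  have hh := le_trans h1 (ler_wpM2l (powR_ge0 _ _) h2).
  apply: le_trans (ler_wpM2l (ltW (hw i)) hh) _.
  rewrite le_eqVlt; apply/orP; left; apply/eqP; ring.
apply: le_trans (ler_sum _ (fun i _ => hi i)) _.
rewrite big_split /= -!big_distrr /= hx hy.
have ap' : 0 < a `^ p by apply: powR_gt0.
have bp' : 0 < b `^ p by apply: powR_gt0.
rewrite le_eqVlt; apply/orP; left; apply/eqP.
field; rewrite ?gt_eqF //.
Qed.

Lemma N_triangle (x y : I -> R) :
  pwnorm p w (fun i => x i + y i) <= pwnorm p w x + pwnorm p w y.
Proof.
have a0 := N_ge0 x; have b0 := N_ge0 y.
have [az|anz] := eqVneq (pwnorm p w x) 0.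
  have hx := N_zero _ az.
  rewrite az add0r; apply: N_le => i.
  by rewrite hx add0r.
have [bz|bnz] := eqVneq (pwnorm p w y) 0.
  have hy := N_zero _ bz.
  rewrite bz addr0; apply: N_le => i.
  by rewrite hy addr0.
have ap : 0 < pwnorm p w x by rewrite lt_def anz a0.
have bp : 0 < pwnorm p w y by rewrite lt_def bnz b0.
have h := mink_core _ _ _ _ ap bp (esym (N_pow x)) (esym (N_pow y)).
have -> : pwnorm p w (fun i => x i + y i) = (\sum_i w i * `|x i + y i| `^ p) `^ p^-1 by [].
rewrite -[X in _ <= X](@powR_invK R p _ p0 (addr_ge0 a0 b0)).
apply: ge0_ler_powR; rewrite ?invr_ge0 ?(ltW p0) ?nnegrE ?sum_ge0 ?powR_ge0 //.
Qed.

End Norm.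

Section MDP.
Variables (R : realType) (S A : finType).
Variables (P : S -> A -> S -> R) (Rw : S -> A -> R) (gamma lam : R).
Hypothesis hlam : 0 < lam.
Hypothesis hg : 0 <= gamma.
Hypothesis hP : forall s a s', 0 <= P s a s'.
Hypothesis hPs : forall s a, \sum_(s' : S) P s a s' = 1.

Lemma sumexp_gt0 (u0 : A) (Q : S * A -> R) s : 0 < \sum_u expR (Q (s, u) / lam).
Proof.
apply: (lt_le_trans (expR_gt0 (Q (s, u0) / lam))).
rewrite (bigD1 u0) //= lerDl; apply: sumr_ge0 => u _; exact: expR_ge0.
Qed.

Lemma lse_le (u0 : A) (Q Q' : S * A -> R) (c : R) s :
  (forall j, Q j <= Q' j + c) ->
  lam * ln (\sum_u expR (Q (s, u) / lam)) <=
  lam * ln (\sum_u expR (Q' (s, u) / lam)) + c.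
Proof.
move=> hQ.
have hS : \sum_u expR (Q (s, u) / lam) <= expR (c / lam) * \sum_u expR (Q' (s, u) / lam).
  rewrite big_distrr /=; apply: ler_sum => u _.
  rewrite -expRD ler_expR -mulrDl ler_pM2r ?invr_gt0 // addrC; exact: hQ.
have p1 := sumexp_gt0 u0 Q s.
have p2 := sumexp_gt0 u0 Q' s.
have hl : ln (\sum_u expR (Q (s, u) / lam)) <= ln (expR (c / lam) * \sum_u expR (Q' (s, u) / lam)).
  by rewrite ler_ln // posrE // mulr_gt0 // expR_gt0.
rewrite lnM ?posrE ?expR_gt0 // expRK in hl.
apply: le_trans (ler_wpM2l (ltW hlam) hl) _.
rewrite le_eqVlt; apply/orP; left; apply/eqP; field; rewrite gt_eqF //.
Qed.

Lemma F_le (u0 : A) (Q Q' : S * A -> R) (c : R) i :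
  (forall j, Q j <= Q' j + c) ->
  Fsoft gamma lam P Rw Q i <= Fsoft gamma lam P Rw Q' i + gamma * c.
Proof.
move=> hQ; rewrite /Fsoft -addrA lerD2l -mulrDr; apply: ler_wpM2l => //.
have -> : c = \sum_(s' : S) P i.1 i.2 s' * c by rewrite -big_distrl /= hPs mul1r.
rewrite -big_split /=; apply: ler_sum => s' _.
rewrite -mulrDr; apply: ler_wpM2l => //; exact: lse_le.
Qed.


Lemma F_contr (p : R) (w : S * A -> R) : 1 < p -> (forall i, 0 < w i) -> \sum_i w i = 1 ->
  forall Q Q' : S * A -> R,
  pwnorm p w (fun i => Fsoft gamma lam P Rw Q i - Fsoft gamma lam P Rw Q' i)
  <= gamma_pw p gamma w * pwnorm p w (fun i => Q i - Q' i).
Proof.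
move=> hp hw hs Q Q'.
have p0 : 0 < p by apply: lt_trans hp.
case: (pickP (fun _ : S * A => true)) => [i0 _|h0]; last first.
  by move: hs; rewrite big_pred0 // => /eqP; rewrite eq_sym oner_eq0.
have wmaxge : forall j, w j <= wmax w by move=> j; rewrite /wmax le_bigmax.
have wmaxp : 0 < wmax w by apply: lt_le_trans (hw i0) (wmaxge i0).
have wminle : forall j, wmin w <= w j by move=> j; rewrite /wmin bigmin_le.
have wminp : 0 < wmin w.
  rewrite /wmin; elim/big_ind: _ => //.
  by move=> a b ha hb; rewrite lt_min ha hb.
pose K := (wmin w)^-1 `^ p^-1.
have K0 : 0 <= K by apply: powR_ge0.
have Nd0 := @N_ge0 R _ p w (fun i => Q i - Q' i).
have hd : forall j, Q j <= Q' j + K * pwnorm p w (fun i => Q i - Q' i) /\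
                    Q' j <= Q j + K * pwnorm p w (fun i => Q i - Q' i).
  move=> j.
  have h1 : wmin w * `|Q j - Q' j| `^ p <= \sum_i w i * `|Q i - Q' i| `^ p.
    apply: le_trans (ler_wpM2r (powR_ge0 _ _) (wminle j)) _.
    rewrite (bigD1 j) //= lerDl; apply: sumr_ge0 => i _.
    by rewrite mulr_ge0 ?powR_ge0 // ltW.
  have h2 : `|Q j - Q' j| `^ p <= (wmin w)^-1 * \sum_i w i * `|Q i - Q' i| `^ p.
    by rewrite -(ler_pM2l wminp) mulrA mulfV ?gt_eqF // mul1r.
  have h3 : `|Q j - Q' j| <= K * pwnorm p w (fun i => Q i - Q' i).
    rewrite -[X in X <= _](@powR_invK R p _ p0 (normr_ge0 _)).
    rewrite /K /pwnorm -powRM ?invr_ge0 ?(ltW wminp) ?(@sum_ge0 R _ p w hw _) //.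
    apply: ge0_ler_powR; rewrite ?invr_ge0 ?(ltW p0) ?nnegrE ?powR_ge0 //.
    by rewrite mulr_ge0 ?invr_ge0 ?(ltW wminp) ?(@sum_ge0 R _ p w hw _).
  move: h3; rewrite ler_norml => /andP [h4 h5]; split.
    by rewrite addrC -lerBlDr.
  by rewrite addrC -lerBlDr -lerN2 opprB.
pose c := K * pwnorm p w (fun i => Q i - Q' i).
have c0 : 0 <= c by rewrite mulr_ge0.
have gc0 : 0 <= gamma * c by rewrite mulr_ge0.
have hF : forall i, `|Fsoft gamma lam P Rw Q i - Fsoft gamma lam P Rw Q' i| <= gamma * c.
  move=> i; rewrite ler_norml; apply/andP; split.
    rewrite lerNl opprB lerBlDr addrC.
    by apply: (F_le i0.2) => j; case: (hd j).
  rewrite lerBlDr addrC.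
  by apply: (F_le i0.2) => j; case: (hd j).
apply: (le_trans (@N_le R _ p w hp hw _ (fun _ => gamma * c) _)).
  by move=> i; rewrite [X in _ <= X]ger0_norm.
rewrite (@N_const R _ p w hp (gamma * c) hs gc0) /c /gamma_pw mulrA.
apply: ler_wpM2r => //.
rewrite -mulrA; apply: ler_wpM2l => //.
have hn : 1 <= wmax w *+ #|{: S * A}|.
  rewrite -hs -sumr_const; apply: ler_sum => i _; exact: wmaxge.
rewrite -powRM ?ler0n ?divr_ge0 ?(ltW wmaxp) ?(ltW wminp) //.
apply: ge0_ler_powR; rewrite ?invr_ge0 ?(ltW p0) ?nnegrE ?invr_ge0 ?(ltW wminp) //.
  by rewrite mulr_ge0 ?ler0n ?divr_ge0 ?(ltW wmaxp) ?(ltW wminp).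
rewrite mulrA -[X in X <= _]mul1r ler_wpM2r ?invr_ge0 ?(ltW wminp) //.
by rewrite mulr_natl.
Qed.

End MDP.

Lemma final_alg (R : realType) (g D1 E1 E2 D2 : R) : g < 1 ->
  D1 <= E1 + g * D1 -> E1 <= E2 -> E2 <= g * D2 + D2 ->
  D1 <= (1 + g) / (1 - g) * D2.
Proof.
move=> hg h1 h2 h3.
have hg' : 0 < 1 - g by rewrite subr_gt0.
rewrite mulrAC ler_pdivlMr //.
have : D1 * (1 - g) <= (1 + g) * D2.
  have e1 : D1 * (1 - g) = D1 - g * D1 by ring.
  have e2 : (1 + g) * D2 = g * D2 + D2 by ring.
  rewrite e1 e2; lra.
by [].
Qed.

Theorem theorem1 (R : realType) (S A : finType) (d : nat)
  (P : S -> A -> S -> R) (Rw : S -> A -> R) (gamma lam p : R)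
  (w : S * A -> R) (Phi : S * A -> 'I_d -> R)
  (Qstar : S * A -> R) (thstar : 'I_d -> R) :
  0 <= gamma -> gamma < 1 -> 0 < lam ->
  (forall s a s', 0 <= P s a s') -> (forall s a, \sum_(s' : S) P s a s' = 1) ->
  (forall i, 0 < w i) -> \sum_i w i = 1 ->
  full_rank Phi ->
  1 < p ->
  gamma_pw p gamma w < 1 ->
  Fsoft gamma lam P Rw Qstar = Qstar ->
  (forall th, f_p p gamma lam P Rw w Phi thstar <= f_p p gamma lam P Rw w Phi th) ->
  forall th : 'I_d -> R,
    pwnorm p w (fun i => Qtheta Phi thstar i - Qstar i)
    <= (1 + gamma_pw p gamma w) / (1 - gamma_pw p gamma w)
       * pwnorm p w (fun i => Qtheta Phi th i - Qstar i).
Proof.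
move=> hg hg1 hlam hP hPs hw hs hfr hp hgp hfix hmin th.
have p0 : 0 < p by apply: lt_trans hp.
have contr := @F_contr R S A P Rw gamma lam hlam hg hP hPs p w hp hw hs.
have sym : forall x y : S * A -> R,
    pwnorm p w (fun i => x i - y i) <= pwnorm p w (fun i => y i - x i).
  by move=> x y; apply: (@N_le R _ p w hp hw) => i; rewrite distrC.
apply: (@final_alg R _ _
  (pwnorm p w (fun i => Fsoft gamma lam P Rw (Qtheta Phi thstar) i - Qtheta Phi thstar i))
  (pwnorm p w (fun i => Fsoft gamma lam P Rw (Qtheta Phi th) i - Qtheta Phi th i)) _ hgp).
- have c1 := contr (Qtheta Phi thstar) Qstar; rewrite hfix in c1.
  apply: (le_trans _ (lerD (sym _ _) c1)).
  apply: (le_trans _ (@N_triangle R _ p w hp hw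
     (fun i => Qtheta Phi thstar i - Fsoft gamma lam P Rw (Qtheta Phi thstar) i)
     (fun i => Fsoft gamma lam P Rw (Qtheta Phi thstar) i - Qstar i))).
  by apply: (@N_le R _ p w hp hw) => i; rewrite addrA subrK.
- have h := hmin th; rewrite /f_p ler_pM2l ?invr_gt0 // in h.
  rewrite leNgt; apply/negP => h'.
  have := gt0_ltr_powR p0 (@N_ge0 R _ p w _) (@N_ge0 R _ p w _) h'.
  by rewrite ltNge h.
- have c1 := contr (Qtheta Phi th) Qstar; rewrite hfix in c1.
  apply: (le_trans _ (lerD c1 (sym _ _))).
  apply: (le_trans _ (@N_triangle R _ p w hp hw
     (fun i => Fsoft gamma lam P Rw (Qtheta Phi th) i - Qstar i)
     (fun i => Qstar i - Qtheta Phi th i))).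
  by apply: (@N_le R _ p w hp hw) => i; rewrite addrA subrK.
Qed.
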